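(* Let $a>0$ with $a\neq1$, and let $x>0$, $y>0$. (i) If $x\le 1$ and $a<1$, then $$\Gamma(x,y)\ \ge\ \Big(\frac{a}{e}\Big)^{x-1}\Big(\frac{1-x}{1-a}\Big)^{x-1}\int_0^1 t^{\frac{1-a}{a}}\big(-\ln(1-t)\big)^{y-1}\,dt .$$ (ii) If $x\ge1$, $a>1$ and $y>\frac{a-1}{a}$, then the integral on the right converges and the reverse inequality holds: $$\Gamma(x,y)\ \le\ \Big(\frac{a}{e}\Big)^{x-1}\Big(\frac{1-x}{1-a}\Big)^{x-1}\int_0^1 t^{\frac{1-a}{a}}\big(-\ln(1-t)\big)^{y-1}\,dt .$$ (When $x=1$ the factor $\big(\frac{1-x}{1-a}\big)^{x-1}$ is interpreted as $0^0=1$.)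
   Context: For $x>0,y>0$ the Bigamma function is the (convergent) improper integral $\Gamma(x,y):=\int_0^1(-\ln t)^{x-1}\big(-\ln(1-t)\big)^{y-1}\,dt$. *)

(* Defs.v *)
From HB Require Import structures.
From mathcomp Require Import all_boot all_order all_algebra.
From mathcomp Require Import all_classical all_reals all_analysis.
Set Implicit Arguments. Unset Strict Implicit. Unset Printing Implicit Defensive.
Import Order.TTheory GRing.Theory Num.Theory.
Local Open Scope classical_set_scope.
Local Open Scope ring_scope.

(* The integrand is nonnegative on ]0,1[, so the (convergent) improper integral
   coincides with the Lebesgue integral over ]0,1[ (extended-real valued). *)
Definition bigamma_integrand {R : realType} (x y : R) (t : R) : R :=
  (- ln t) `^ (x - 1) * (- ln (1 - t)) `^ (y - 1).

Definition Bigamma {R : realType} (x y : R) : \bar R :=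
  (\int[@lebesgue_measure R]_(t in `]0%R, 1%R[) (bigamma_integrand x y t)%:E)%E.

Definition cmp_integrand {R : realType} (a y : R) (t : R) : R :=
  t `^ ((1 - a) / a) * (- ln (1 - t)) `^ (y - 1).

(* the constant (a/e)^(x-1) ((1-x)/(1-a))^(x-1); powR 0 0 = 1 handles x = 1 *)
Definition cmp_const {R : realType} (a x : R) : R :=
  (a / expR 1) `^ (x - 1) * ((1 - x) / (1 - a)) `^ (x - 1).

(* Main.v *)
Require Import Defs.
From HB Require Import structures.
From mathcomp Require Import all_boot all_order all_algebra.
From mathcomp Require Import all_classical all_reals all_analysis.
From mathcomp Require Import ring lra.
From mathcomp Require Import measurable_realfun.
Import Order.TTheory GRing.Theory Num.Theory.
Import numFieldTopology.Exports numFieldNormedType.Exports.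
Local Open Scope classical_set_scope.
Local Open Scope ring_scope.

Section S.
Variable R : realType.
Let mu := @lebesgue_measure R.
Lemma powRpos (a x : R) : 0 < a -> a `^ x = expR (x * ln a).
Proof. by move=> a0; rewrite /powR gt_eqF. Qed.

Lemma ln_le_lin (u u0 : R) : 0 < u -> 0 < u0 -> ln u - ln u0 <= u / u0 - 1.
Proof.
move=> u0' u00.
rewrite -ln_div ?posrE //.
have h := @le_ln1Dx R (u / u0 - 1).
rewrite (addrC 1) subrK in h; apply: h.
have q : 0 < u / u0 by rewrite divr_gt0.
lra.
Qed.

Lemma key_ge (u u0 k : R) : 0 < u -> 0 < u0 -> 0 <= k ->
  u `^ k <= u0 `^ k * expR (- k) * expR (k / u0 * u).
Proof.
move=> u0' u00 k0.
rewrite !powRpos // -!expRD ler_expR.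
have h := ln_le_lin _ _ u0' u00.
have : k * (ln u - ln u0) <= k * (u / u0 - 1) by rewrite ler_wpM2l.
rewrite mulrC.
have -> : k / u0 * u = k * (u / u0) by rewrite mulrAC -mulrA.
nra.
Qed.

Lemma key_le (u u0 k : R) : 0 < u -> 0 < u0 -> k <= 0 ->
  u0 `^ k * expR (- k) * expR (k / u0 * u) <= u `^ k.
Proof.
move=> u0' u00 k0.
rewrite !powRpos // -!expRD ler_expR.
have h := ln_le_lin _ _ u0' u00.
have : k * (u / u0 - 1) <= k * (ln u - ln u0) by rewrite ler_wnM2l.
have -> : k / u0 * u = k * (u / u0) by rewrite mulrAC -mulrA.
nra.
Qed.


Lemma cmp_const_eq (a x : R) : 0 < a -> 0 < (1 - x) / (1 - a) ->
  cmp_const a x = (a * ((1 - x) / (1 - a))) `^ (x - 1) * expR (- (x - 1)).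
Proof.
move=> a0 q0; rewrite /cmp_const.
rewrite -powRM; last 2 first.
- by rewrite divr_ge0 // ?ltW // expR_gt0.
- exact: ltW.
have -> : a / expR 1 * ((1 - x) / (1 - a)) = (a * ((1 - x) / (1 - a))) * expR (-1).
  by rewrite expRN; rewrite mulrAC.
rewrite powRM; last 2 first.
- by rewrite mulr_ge0 // ltW.
- exact/ltW/expR_gt0.
by rewrite -expRM mulN1r.
Qed.

Lemma cmp_const1 (a : R) : cmp_const a 1 = 1.
Proof. by rewrite /cmp_const subrr !powRr0 mulr1. Qed.

Lemma t_pow_eq (a x t : R) : 0 < a -> a != 1 -> x != 1 -> 0 < t ->
  expR ((x - 1) / (a * ((1 - x) / (1 - a))) * (- ln t)) = t `^ ((1 - a) / a).
Proof.
move=> a0 a1 x1 t0; rewrite powRpos //; congr expR.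
have ha : a != 0 by rewrite gt_eqF.
have h1 : 1 - a != 0 by rewrite subr_eq0 eq_sym.
have h2 : 1 - x != 0 by rewrite subr_eq0 eq_sym.
by field; rewrite h1 h2 ha.
Qed.

Lemma pt_i (a x t : R) : 0 < a < 1 -> 0 < x <= 1 -> 0 < t < 1 ->
  cmp_const a x * t `^ ((1 - a) / a) <= (- ln t) `^ (x - 1).
Proof.
move=> /andP[a0 a1] /andP[x0 x1] /andP[t0 t1].
have lt0 : ln t < 0 by rewrite ln_lt0 // t0 t1.
have [->|xne] := eqVneq x 1.
  rewrite cmp_const1 subrr powRr0 mul1r powRpos // expR_le1.
  apply: mulr_ge0_le0; last exact: ltW.
  by apply: divr_ge0; rewrite ?subr_ge0 ltW.
have xl : x < 1 by rewrite lt_neqAle xne x1.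
have q0 : 0 < (1 - x) / (1 - a) by rewrite divr_gt0 // subr_gt0.
rewrite cmp_const_eq // -(@t_pow_eq a x t a0 _ xne t0); last by rewrite lt_eqF.
apply: key_le.
- by rewrite oppr_gt0.
- by rewrite mulr_gt0.
- by rewrite subr_le0.
Qed.

Lemma pt_ii (a x t : R) : 1 < a -> 1 <= x -> 0 < t < 1 ->
  (- ln t) `^ (x - 1) <= cmp_const a x * t `^ ((1 - a) / a).
Proof.
move=> a1 x1 /andP[t0 t1].
have a0 : 0 < a by apply: lt_trans a1.
have lt0 : ln t < 0 by rewrite ln_lt0 // t0 t1.
have [->|xne] := eqVneq x 1.
  rewrite cmp_const1 subrr powRr0 mul1r powRpos //; apply: le_trans (expR_ge1Dx _); rewrite lerDl.
  apply: mulr_le0; last exact: ltW.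
  rewrite pmulr_lle0 ?invr_gt0 // subr_le0. exact: ltW.
have xl : 1 < x by rewrite lt_neqAle eq_sym xne x1.
have q0 : 0 < (1 - x) / (1 - a).
  have h1 : 0 < x - 1 by rewrite subr_gt0.
  have h2 : 0 < a - 1 by rewrite subr_gt0.
  have -> : (1 - x) / (1 - a) = (x - 1) / (a - 1) by rewrite -mulrNN -invrN !opprB.
  exact: divr_gt0.
rewrite cmp_const_eq // -(@t_pow_eq a x t a0 _ xne t0); last by rewrite gt_eqF.
apply: key_ge.
- by rewrite oppr_gt0.
- by rewrite mulr_gt0.
- by rewrite subr_ge0.
Qed.

Lemma m_pl (p : R) : measurable_fun setT (fun t : R => (- ln t) `^ p).
Proof.
apply: (measurableT_comp (@measurable_powR R p)).
apply: measurableT_comp => //; exact: measurable_ln.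
Qed.

Lemma m_pl1 (p : R) : measurable_fun setT (fun t : R => (- ln (1 - t)) `^ p).
Proof.
apply: (measurableT_comp (@measurable_powR R p)).
apply: measurableT_comp => //.
apply: (measurableT_comp (@measurable_ln R)).
by apply: measurable_funD => //; apply: measurableT_comp.
Qed.

Lemma m_big (x y : R) : measurable_fun setT (bigamma_integrand x y).
Proof. exact: measurable_funM (m_pl _) (m_pl1 _). Qed.

Lemma m_cmp (a y : R) : measurable_fun setT (cmp_integrand a y).
Proof. exact: measurable_funM (@measurable_powR R _) (m_pl1 _). Qed.

Definition An (n : nat) : set R := `[ (n.+3%:R)^-1, 1 - (n.+3%:R)^-1 ].

Lemma An_sub n : An n `<=` `]0, 1[.
Proof.
move=> t; rewrite /An /= !in_itv /= => /andP[h1 h2].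
have h0 : 0 < (n.+3%:R : R)^-1 by rewrite invr_gt0 ltr0n.
move: h0 h1 h2; set e := (_^-1); move=> h0 h1 h2; apply/andP; split; lra.
Qed.

Lemma An_nd : {homo An : n m / (n <= m)%N >-> n `<=` m}.
Proof.
move=> n m nm t; rewrite /An /= !in_itv /= => /andP[h1 h2].
have hle : (m.+3%:R : R)^-1 <= (n.+3%:R)^-1.
  by rewrite lef_pV2 ?posrE ?ltr0n // ler_nat ltnS ltnS ltnS.
move: hle h1 h2; set e1 := (_^-1); set e2 := (_^-1); move=> hle h1 h2.
apply/andP; split; lra.
Qed.

Lemma An_cup : \bigcup_n An n = `]0, 1[%classic.
Proof.
apply/seteqP; split.
  by move=> t [n _]; apply: An_sub.
move=> t; rewrite /= in_itv /= => /andP[t0 t1].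
have m0 : 0 < Num.min t (1 - t) by rewrite lt_min t0 subr_gt0.
pose n := Num.trunc ((Num.min t (1 - t))^-1).
exists n => //.
have hn : (Num.min t (1 - t))^-1 < n.+3%:R.
  apply: lt_trans (truncnS_gt _) _; rewrite ltr_nat; by [].
have : (n.+3%:R : R)^-1 < Num.min t (1 - t).
  rewrite -(invrK (Num.min _ _)) ltf_pV2 ?posrE ?invr_gt0 ?ltr0n //.
rewrite lt_min => /andP[h1 h2].
move: h1 h2; set e := (_^-1); move=> h1 h2.
rewrite /An /= in_itv /=; apply/andP; split.
  rewrite -/e; lra. rewrite -/e; lra.
Qed.


Lemma int_bound (f F : R -> R) (M : R) :
  {in `]0 : R, 1[, continuous f} -> (forall t, 0 < t < 1 -> 0 <= f t) ->
  (forall t, 0 < t < 1 -> derivable F t 1) -> {in `]0 : R, 1[, F^`()%classic =1 f} ->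
  (forall t, 0 < t < 1 -> `|F t| <= M) ->
  (\int[mu]_(t in `]0%R, 1%R[) (f t)%:E <= (M *+ 2)%:E)%E.
Proof.
move=> cf f0 dF dFf FM.
have mf : measurable_fun (`]0, 1[ : set R) f.
  apply: open_continuous_measurable_fun => // z; rewrite inE /= => zA; exact: cf.
have mA n : measurable (An n) by rewrite /An; exact: measurable_itv.
have mfA n : measurable_fun (An n) (EFin \o f).
  apply/measurable_EFinP; apply: measurable_funS mf => //; exact: An_sub.
have f0A n x : An n x -> (0 <= (EFin \o f) x)%E.
  move=> /An_sub; rewrite /= in_itv /= => h; rewrite lee_fin; exact: f0.
have An_nd' : {homo An : n m / (n <= m)%N >-> (n <= m)%O}.
  by move=> n m /An_nd; rewrite subsetEset.
have h := @ge0_nondecreasing_set_cvg_integral _ (measurableTypeR R) R An (EFin \o f) (@lebesgue_measure R) An_nd' mA mfA f0A.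
rewrite -An_cup -(cvg_lim _ h) //.
apply: lime_le; first by apply/cvg_ex; eexists; exact: h.
apply: nearW => n.
have hs := An_sub n.
have e0 : 0 < (n.+3%:R : R)^-1 by rewrite invr_gt0 ltr0n.
have e1 : (n.+3%:R : R)^-1 < 1 - (n.+3%:R)^-1.
  have h3 : 3 <= (n.+3%:R : R) by rewrite ler_nat.
  have hm : (n.+3%:R : R)^-1 * n.+3%:R = 1 by rewrite mulVf // pnatr_eq0.
  move: e0 hm h3; set e := _^-1; set N := _%:R; move=> e0 hm h3.
  nra.
rewrite /An /=.
move: e0 e1; set e := (n.+3%:R : R)^-1 => e0 e1.
have k1 : 0 < 1 - e < 1 by apply/andP; split; lra.
have k2 : 0 < e < 1 by apply/andP; split; lra.
have sub : forall z, e <= z <= 1 - e -> 0 < z < 1.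
  by move=> z /andP[z1 z2]; apply/andP; split; lra.
rewrite (continuous_FTC2 (F := F) e1).
- rewrite -EFinB lee_fin.
  move: (FM _ k1) (FM _ k2); rewrite !ler_norml => /andP[? ?] /andP[? ?].
  rewrite mulr2n; lra.
- apply: continuous_in_subspaceT => z; rewrite inE /= in_itv /= => zA.
  by apply: cf; rewrite in_itv /=; exact: sub.
- have cF : {within `[e, 1 - e], continuous F}.
    apply: derivable_within_continuous => z; rewrite in_itv /= => zA.
    exact/dF/sub.
  have [_ l r] := (continuous_within_itvP _ e1).1 cF.
  split => // z; rewrite in_itv /= => /andP[z1 z2]; apply/dF/sub.
  by apply/andP; split; lra.
- move=> z; rewrite in_itv /= => /andP[z1 z2]; apply: dFf.
  by rewrite in_itv /=; apply: sub; apply/andP; split; lra.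
Qed.


Lemma int_bound' (f F : R -> R) (M : R) :
  {in `]0 : R, 1[, continuous f} -> (forall t, 0 < t < 1 -> 0 <= f t) ->
  (forall t : R, 0 < t < 1 -> is_derive t 1 F (f t)) ->
  (forall t, 0 < t < 1 -> `|F t| <= M) ->
  (\int[mu]_(t in `]0%R, 1%R[) (f t)%:E <= (M *+ 2)%:E)%E.
Proof.
move=> cf f0 dF FM; apply: (int_bound f F M) => //.
- by move=> t /dF [d1 d2].
- move=> t; rewrite in_itv /= => /dF h.
  by rewrite derive1E derive_val.
Qed.

Lemma powR_le1 (t p : R) : 0 < t < 1 -> 0 <= p -> t `^ p <= 1.
Proof.
move=> /andP[t0 t1] p0; rewrite /powR gt_eqF // expR_le1.
apply: mulr_ge0_le0 => //; apply: ln_le0; exact: ltW.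
Qed.

Lemma powR_lt1 (t p : R) : 0 < t < 1 -> 0 < p -> t `^ p < 1.
Proof.
move=> /andP[t0 t1] p0; rewrite /powR gt_eqF // expR_lt1.
by rewrite pmulr_rlt0 // ln_lt0 // t0 t1.
Qed.

Lemma powR_cont (p : R) : {in `]0 : R, 1[, continuous (fun t : R => t `^ p)}.
Proof.
move=> t; rewrite in_itv /= => /andP[t0 _].
apply/differentiable_continuous; rewrite -derivable1_diffP.
by apply: derivable_powR; rewrite in_itv /= andbT.
Qed.

Lemma int_pow_le (p : R) : -1 < p ->
  (\int[mu]_(t in `]0%R, 1%R[) (t `^ p)%:E <= (((p + 1)^-1) *+ 2)%:E)%E.
Proof.
move=> p1; have q0 : 0 < p + 1 by lra.
apply: (@int_bound' _ (fun t => (p + 1)^-1 * t `^ (p + 1))).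
- exact: powR_cont.
- by move=> t _; exact: powR_ge0.
- move=> t /andP[t0 _].
  have := is_deriveZ ((p + 1)^-1) (is_derive1_powR (p + 1) t0).
  move=> h; rewrite (_ : (fun t1 : R => _) = (p + 1)^-1 \*: (powR (R:=R))^~ (p + 1)) //.
  case: h => d1 d2; split; first exact: d1.
  rewrite d2.
  rewrite addrK -[_ *: _]/(_ * _) mulrA mulVf ?mul1r //; exact: lt0r_neq0.
- move=> t tt; rewrite ger0_norm; last by rewrite mulr_ge0 ?powR_ge0 // invr_ge0 ltW.
  rewrite -[leRHS]mulr1 ler_wpM2l ?invr_ge0 ?ltW //.
  by apply: (powR_lt1 _ _ tt).
Qed.


Lemma is_derive_onemp (p : R) (t : R) : t < 1 ->
  is_derive t 1 (fun s : R => (1 - s) `^ p) (p * (1 - t) `^ (p - 1) * (-1)).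
Proof.
move=> t1.
have hg : is_derive t 1 (fun s : R => 1 - s) (-1).
  have := is_deriveB (is_derive_cst (1 : R) t 1) (is_derive_id t 1).
  move=> h; case: h => d1 d2; split; first exact: d1.
  by rewrite d2 sub0r.
have hf : is_derive (1 - t) 1 (fun s : R => s `^ p) (p * (1 - t) `^ (p - 1)).
  by apply: is_derive1_powR; rewrite subr_gt0.
have := @is_derive1_comp R (fun s : R => s `^ p) (fun s : R => 1 - s) t _ _ hf hg; case => d1 d2; split; [exact: d1 | by rewrite d2].
Qed.

Lemma onemp_cont (p : R) : {in `]0 : R, 1[, continuous (fun t : R => (1 - t) `^ p)}.
Proof.
move=> t; rewrite in_itv /= => /andP[_ t1].
have [d1 _] := @is_derive_onemp p t t1.
by apply/differentiable_continuous; rewrite -derivable1_diffP.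
Qed.

Lemma int_pow1_le (p : R) : -1 < p ->
  (\int[mu]_(t in `]0%R, 1%R[) ((1 - t) `^ p)%:E <= (((p + 1)^-1) *+ 2)%:E)%E.
Proof.
move=> p1; have q0 : 0 < p + 1 by lra.
apply: (@int_bound' _ (fun t => - (p + 1)^-1 * (1 - t) `^ (p + 1))).
- exact: onemp_cont.
- by move=> t _; exact: powR_ge0.
- move=> t /andP[t0 t1].
  have := is_deriveZ (- (p + 1)^-1) (@is_derive_onemp (p + 1) t t1).
  case => d1 d2; split; first exact: d1.
  rewrite d2 addrK -[_ *: _]/(_ * _).
  rewrite mulrN1 mulNr mulrN opprK mulrA mulVf ?mul1r //; exact: lt0r_neq0.
- move=> t /andP[t0 t1].
  have tt : 0 < 1 - t < 1 by apply/andP; split; lra.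
  rewrite normrM normrN (ger0_norm (x := (p + 1)^-1)) ?invr_ge0 ?ltW // ger0_norm ?powR_ge0 //.
  rewrite -[ltRHS]mulr1 ltr_pM2l ?invr_gt0 //.
  exact: (powR_lt1 _ _ tt).
Qed.


Lemma integ_of (f : R -> R) (M : R) : measurable_fun setT f ->
  (forall t, 0 <= f t) ->
  (\int[mu]_(t in `]0%R, 1%R[) (f t)%:E <= M%:E)%E ->
  mu.-integrable `]0%R, 1%R[ (fun t => (f t)%:E).
Proof.
move=> mf f0 hM; apply/integrableP; split.
  apply/measurable_EFinP; exact: measurable_funS mf.
under eq_integral do rewrite abse_EFin ger0_norm //.
by apply: le_lt_trans hM _; exact: ltry.
Qed.

Lemma integ_pow (p : R) : -1 < p ->
  mu.-integrable `]0%R, 1%R[ (fun t => (t `^ p)%:E).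
Proof.
move=> p1; apply: (@integ_of (fun t => t `^ p) _ (measurable_powR p) _ (int_pow_le _ p1)).
by move=> t; exact: powR_ge0.
Qed.

Lemma integ_pow1 (p : R) : -1 < p ->
  mu.-integrable `]0%R, 1%R[ (fun t => ((1 - t) `^ p)%:E).
Proof.
move=> p1.
have mf : measurable_fun setT (fun t : R => (1 - t) `^ p).
  apply: (measurableT_comp (measurable_powR p)).
  by apply: measurable_funD => //; apply: measurableT_comp.
apply: (@integ_of (fun t => (1 - t) `^ p) _ mf _ (int_pow1_le _ p1)).
by move=> t; exact: powR_ge0.
Qed.


Lemma ln_ge_neg (t : R) : 0 < t < 1 -> t <= - ln (1 - t).
Proof.
move=> /andP[t0 t1].
have h := @le_ln1Dx R (- t); rewrite -/(1 - t) in h.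
have : ln (1 - t) <= - t by apply: h; lra.
lra.
Qed.

Lemma powR_base_anti (t s k : R) : 0 < t -> t <= s -> k <= 0 -> s `^ k <= t `^ k.
Proof.
move=> t0 ts k0; have s0 : 0 < s by exact: lt_le_trans ts.
rewrite !powRpos // ler_expR ler_wnM2l //.
by rewrite ler_ln ?posrE.
Qed.

Lemma small_pow (b q : R) : 2^-1 <= b <= 1 -> -1 <= q <= 0 -> b `^ q <= 2.
Proof.
move=> /andP[b1 b2] /andP[q1 q2].
have b0 : 0 < b by apply: lt_le_trans b1; rewrite invr_gt0.
rewrite powRpos // -[leRHS](@lnK R 2) ?posrE // ler_expR.
have l1 : ln b <= 0 by exact: ln_le0.
have l2 : - ln 2 <= ln b.
  rewrite -lnV ?posrE // ler_ln ?posrE ?invr_gt0 //.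
have l3 : 0 <= ln (2 : R) by rewrite ln_ge0 // ler1n.
nra.
Qed.

Lemma split_pow (t c q : R) : 0 < t < 1 -> -1 <= c <= 0 -> -1 <= q <= 0 ->
  t `^ c * (1 - t) `^ q <= 2 * t `^ c + 2 * (1 - t) `^ q.
Proof.
move=> /andP[t0 t1] hc hq.
have g1 := @powR_ge0 R t c; have g2 := @powR_ge0 R (1 - t) q.
have [th|th] := leP t 2^-1.
  have : (1 - t) `^ q <= 2 by apply: small_pow => //; apply/andP; split; lra.
  move=> h; nra.
have : t `^ c <= 2 by apply: small_pow => //; apply/andP; split; lra.
move=> h; nra.
Qed.

Lemma integ_cmp (a y : R) : 1 < a -> 0 < y -> (a - 1) / a < y ->
  mu.-integrable `]0%R, 1%R[ (fun t => (cmp_integrand a y t)%:E).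
Proof.
move=> a1 y0 ya.
have a0 : 0 < a by lra.
have ceq : (1 - a) / a = a^-1 - 1 by rewrite mulrBl mul1r mulfV // gt_eqF.
have ai : 0 < a^-1 < 1 by rewrite invr_gt0 a0 /= invf_lt1.
have c1 : -1 < (1 - a) / a by rewrite ceq; lra.
have c0 : (1 - a) / a < 0 by rewrite ceq; lra.
have yc : -1 < (1 - a) / a + (y - 1).
  have : (a - 1) / a = - ((1 - a) / a) by rewrite -mulNr opprB.
  lra.
have mD : measurable (`]0%R, 1%R[ : set (measurableTypeR R)) by exact: measurable_itv.
have mf : measurable_fun (`]0%R, 1%R[ : set R) (fun t => (cmp_integrand a y t)%:E).
  apply/measurable_EFinP; apply: measurable_funS (m_cmp a y) => //.
have [y1|y1] := leP y 1.
  apply: (le_integrable _ _ _ (integ_pow _ yc)) => //.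
  move=> t; rewrite /= in_itv /= => tt.
  have /andP[t0 _] := tt.
  rewrite lee_fin !ger0_norm ?powR_ge0 //; last first.
    by rewrite /cmp_integrand mulr_ge0 ?powR_ge0.
  rewrite /cmp_integrand (powRD (x := t)); last by apply/implyP => _; rewrite (gt_eqF t0).
  apply: ler_wpM2l; first exact: powR_ge0.
  apply: powR_base_anti => //; first exact: ln_ge_neg.
  lra.
pose K := cmp_const 2 y.
have K0 : 0 <= K by rewrite /K /cmp_const mulr_ge0 ?powR_ge0.
have hq : -1 < (1 - 2) / 2 :> R.
  rewrite (_ : (1 - 2) / 2 = - 2^-1 :> R); last by field.
  have h2 : (2:R)^-1 < 1 by rewrite invf_lt1 ?ltr1n.
  lra.
have ig := integrableD mD (integrableZl mD (K * 2) (integ_pow _ c1))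
   (integrableZl mD (K * 2) (@integ_pow1 ((1 - 2) / 2) hq)).
apply: (le_integrable mD mf _ ig).
move=> t; rewrite /= in_itv /= => tt.
have /andP[t0 t1] := tt.
have tt' : 0 < 1 - t < 1 by apply/andP; split; lra.
have := pt_ii 2 y (1 - t).
rewrite (_ : (1 - 2) / 2 = - 2^-1 :> R); last by field.
move=> /(_ _ _ tt') h.
have {h}h : (- ln (1 - t)) `^ (y - 1) <= K * (1 - t) `^ (- 2^-1).
  by apply: h; [lra | lra].
rewrite lee_fin.
rewrite !ger0_norm; last 2 first.
- by rewrite addr_ge0 // mulr_ge0 ?powR_ge0 // mulr_ge0.
- by rewrite /cmp_integrand mulr_ge0 ?powR_ge0.
rewrite /cmp_integrand.
apply: (le_trans (ler_wpM2l (powR_ge0 _ _) h)).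
have := @split_pow t ((1 - a) / a) (- 2^-1) tt.
move=> /(_ _ _) sp.
have sp' := sp (ltac:(apply/andP; split; lra)) (ltac:(apply/andP; split; lra)).
move: sp' K0; set A := t `^ _; set B := (1 - t) `^ _ => sp' K0.
nra.
Qed.
End S.

Theorem mainTheorem4 (R : realType) (a x y : R) :
  0 < a -> a != 1 -> 0 < x -> 0 < y ->
  (x <= 1 -> a < 1 ->
     (Bigamma x y >=
      (cmp_const a x)%:E *
        \int[@lebesgue_measure R]_(t in `]0%R, 1%R[) (cmp_integrand a y t)%:E)%E) /\
  (1 <= x -> 1 < a -> (a - 1) / a < y ->
     (@lebesgue_measure R).-integrable `]0%R, 1%R[ (fun t => (cmp_integrand a y t)%:E) /\
     (Bigamma x y <=
      (cmp_const a x)%:E *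
        \int[@lebesgue_measure R]_(t in `]0%R, 1%R[) (cmp_integrand a y t)%:E)%E).
Proof.
move=> a0 a1 x0 y0.
have mD : measurable (`]0%R, 1%R[ : set (measurableTypeR R)) by exact: measurable_itv.
have mc : measurable_fun (`]0%R, 1%R[ : set R)
    (fun t => (cmp_integrand a y t)%:E).
  apply/measurable_EFinP; exact: measurable_funS (m_cmp R a y).
have mb : measurable_fun (`]0%R, 1%R[ : set R)
    (fun t => (bigamma_integrand x y t)%:E).
  apply/measurable_EFinP; exact: measurable_funS (m_big R x y).
have c0 t : (0 <= (cmp_integrand a y t)%:E)%E.
  by rewrite lee_fin /cmp_integrand mulr_ge0 ?powR_ge0.
have b0 t : (0 <= (bigamma_integrand x y t)%:E)%E.
  by rewrite lee_fin /bigamma_integrand mulr_ge0 ?powR_ge0.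
have K0 : 0 <= cmp_const a x by rewrite /cmp_const mulr_ge0 ?powR_ge0.
rewrite /Bigamma -(ge0_integralZl_EFin _ mD (fun t _ => c0 t) mc K0).
have mKc : measurable_fun (`]0%R, 1%R[ : set (measurableTypeR R))
    (fun t => ((cmp_const a x)%:E * (cmp_integrand a y t)%:E)%E).
  exact: measurable_funeM.
split.
  move=> x1 al.
  apply: ge0_le_integral => //.
    by move=> t _; rewrite mule_ge0.
  move=> t; rewrite /= in_itv /= => tt.
  rewrite -EFinM lee_fin /cmp_integrand /bigamma_integrand mulrA.
  apply: ler_wpM2r; first exact: powR_ge0.
  apply: pt_i => //; apply/andP; split => //.
move=> x1 ag ya; split; first exact: integ_cmp.
apply: ge0_le_integral => //.
move=> t; rewrite /= in_itv /= => tt.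
rewrite -EFinM lee_fin /cmp_integrand /bigamma_integrand mulrA.
apply: ler_wpM2r; first exact: powR_ge0.
exact: pt_ii.
Qed.
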